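(* Let $\mathcal{P}=\{X_i\mid i\in I\}$ be a partition of a set $X$. Then the quotient semigroup $\Sigma(X,\mathcal{P})/\chi$ is isomorphic to the semigroup of all surjective maps $I\to I$ (under composition).
   Context: Maps are written on the right and composed left to right ($x(fg)=(xf)g$). $T(X,\mathcal{P})=\{f\colon X\to X\mid \forall i\ \exists j:\ X_if\subseteq X_j\}$ (distinct indices for distinct blocks) and $\Sigma(X,\mathcal{P})=\{f\in T(X,\mathcal{P})\mid Xf\cap X_i\neq\emptyset\ \forall i\in I\}$, a subsemigroup. For $f\in T(X,\mathcal{P})$, $\chi^{(f)}\colon I\to I$ is defined by $i\chi^{(f)}=j$ whenever $X_if\subseteq X_j$. The relation $\chi$ on $\Sigma(X,\mathcal{P})$ defined by $(f,g)\in\chi\iff\chi^{(f)}=\chi^{(g)}$ is a congruence, and $\Sigma(X,\mathcal{P})/\chi$ is the corresponding quotient semigroup with $[f][g]=[fg]$. *)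

(* Defs.v *)
Set Implicit Arguments.

(* A partition P = {X_i | i in I} of a set X is encoded by the map
   [block : X -> I] sending x to the index i of the block X_i containing x,
   i.e. X_i = {x | block x = i}.  Blocks of a partition are nonempty, which
   is the hypothesis [forall i, exists x, block x = i] in the theorem.
   Distinct indices give distinct (indeed disjoint) blocks automatically. *)

Section Defs.
Variables (X I : Type) (block : X -> I).

(* Maps are written on the right: x(fg) = (xf)g, so the semigroup product
   fg of f, g : X -> X is the Rocq function  fun x => g (f x). *)
Definition rcomp {A : Type} (f g : A -> A) : A -> A := fun x => g (f x).

Definition maps_block_into (f : X -> X) (i j : I) : Prop :=
  forall x, block x = i -> block (f x) = j.

Definition in_T (f : X -> X) : Prop := forall i, exists j, maps_block_into f i j.

Definition in_Sigma (f : X -> X) : Prop :=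
  in_T f /\ forall i, exists x, block (f x) = i.

(* (f,g) in chi  iff  chi^(f) = chi^(g); the graph of chi^(f) is
   {(i,j) | X_i f ⊆ X_j} (a function I -> I since blocks are nonempty). *)
Definition chi (f g : X -> X) : Prop :=
  forall i j, maps_block_into f i j <-> maps_block_into g i j.

Definition chi_class (f : X -> X) : (X -> X) -> Prop :=
  fun g => in_Sigma g /\ chi f g.

(* Elements of the quotient semigroup Sigma(X,P)/chi are the chi-classes. *)
Definition is_class (C : (X -> X) -> Prop) : Prop :=
  exists f, in_Sigma f /\ C = chi_class f.

(* Product in the quotient: [f][g] = [fg]. Defined representative-free as the
   chi-class of a product of representatives. *)
Definition mulQ (C D : (X -> X) -> Prop) : (X -> X) -> Prop :=
  fun h => in_Sigma h /\
    exists f g, C f /\ D g /\ chi (rcomp f g) h.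

End Defs.

Definition surj {A B : Type} (s : A -> B) : Prop := forall b, exists a, s a = b.

(* Main.v *)
Require Import Defs.
From Stdlib Require Import ClassicalEpsilon FunctionalExtensionality PropExtensionality.


Section H.
Variables (X I : Type) (block : X -> I).
Hypothesis Hpart : forall i : I, exists x : X, block x = i.

Lemma T_iff f x j : in_T block f ->
  (maps_block_into block f (block x) j <-> block (f x) = j).
Proof.
  intros HT; split.
  - intros H; apply H; reflexivity.
  - intros <- y Hy. destruct (HT (block x)) as [j' Hj'].
    rewrite (Hj' y Hy). symmetry. apply Hj'. reflexivity.
Qed.

Lemma T_resp f x y : in_T block f -> block x = block y -> block (f x) = block (f y).
Proof.
  intros HT E. destruct (HT (block x)) as [j Hj].
  rewrite (Hj x eq_refl). symmetry. apply Hj. symmetry; exact E.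
Qed.

Lemma chi_iff f g : in_T block f -> in_T block g ->
  (chi block f g <-> forall x, block (f x) = block (g x)).
Proof.
  intros Hf Hg; split.
  - intros H x. symmetry. apply (proj1 (T_iff _ x _ Hg)). apply (proj1 (H (block x) (block (f x)))).
    apply (proj2 (T_iff _ x _ Hf)). reflexivity.
  - intros H i j; split; intros M y Hy.
    + rewrite <- H. apply M; exact Hy.
    + rewrite H. apply M; exact Hy.
Qed.

Definition phi (C : (X -> X) -> Prop) (i : I) : I :=
  epsilon (inhabits i) (fun j => exists f, C f /\ maps_block_into block f i j).

Lemma chi_refl f : chi block f f.
Proof. intros i j; tauto. Qed.

Lemma phi_spec f0 x : in_Sigma block f0 ->
  phi (chi_class block f0) (block x) = block (f0 x).
Proof.
  intros HS. unfold phi.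
  destruct (epsilon_spec (inhabits (block x))
     (fun j => exists f, chi_class block f0 f /\ maps_block_into block f (block x) j))
    as [f [[_ Hc] M]].
  - exists (block (f0 x)), f0. split. split; [exact HS | apply chi_refl].
    apply (proj2 (T_iff _ x _ (proj1 HS))). reflexivity.
  - apply Hc in M. symmetry. apply (proj1 (T_iff _ x _ (proj1 HS))). exact M.
Qed.

Lemma Sigma_comp f g : in_Sigma block f -> in_Sigma block g -> in_Sigma block (rcomp f g).
Proof.
  intros [Tf Sf] [Tg Sg]. split.
  - intros i. destruct (Hpart i) as [x0 Hx0]. exists (block (g (f x0))).
    intros y Hy. unfold rcomp. apply T_resp; [exact Tg|]. apply T_resp; [exact Tf|].
    congruence.
  - intros i. destruct (Sg i) as [y Hy]. destruct (Sf (block y)) as [x Hx].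
    exists x. unfold rcomp. rewrite <- Hy. apply T_resp; assumption.
Qed.

End H.
Arguments phi {X I} block.
Arguments T_resp {X I block f x y}.
Arguments chi_iff {X I block f g}.
Arguments phi_spec {X I block f0 x}.
Arguments Sigma_comp {X I block} Hpart {f g}.

Theorem lemma3p8 (X I : Type) (block : X -> I)
  (Hpart : forall i : I, exists x : X, block x = i) :
  exists phi : ((X -> X) -> Prop) -> (I -> I),
    (forall C, is_class block C -> surj (phi C)) /\
    (forall C D, is_class block C -> is_class block D -> phi C = phi D -> C = D) /\
    (forall s : I -> I, surj s -> exists C, is_class block C /\ phi C = s) /\
    (forall C D, is_class block C -> is_class block D ->
       phi (mulQ block C D) = rcomp (phi C) (phi D)).
Proof.
  exists (phi block). split; [|split; [|split]].
  - intros C [f [HS ->]] b. destruct (proj2 HS b) as [x Hx].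
    exists (block x). rewrite phi_spec; assumption.
  - intros C D [f [Hf ->]] [g [Hg ->]] E.
    assert (Hfg : forall x, block (f x) = block (g x)).
    { intros x. rewrite <- (phi_spec Hf), <- (phi_spec Hg), E. reflexivity. }
    apply functional_extensionality; intros h.
    apply propositional_extensionality. unfold chi_class. split.
    + intros [Hh Hc]. split; [exact Hh|].
      apply (chi_iff (proj1 Hg) (proj1 Hh)). intros x.
      rewrite <- Hfg. apply (chi_iff (proj1 Hf) (proj1 Hh)). exact Hc.
    + intros [Hh Hc]. split; [exact Hh|].
      apply (chi_iff (proj1 Hf) (proj1 Hh)). intros x.
      rewrite Hfg. apply (chi_iff (proj1 Hg) (proj1 Hh)). exact Hc.
  - intros s Hs.
    set (f := fun x => epsilon (inhabits x) (fun y => block y = s (block x))).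
    assert (Hf : forall x, block (f x) = s (block x)).
    { intros x. unfold f. apply (epsilon_spec (inhabits x) (fun y => block y = s (block x))).
      apply Hpart. }
    assert (HS : in_Sigma block f).
    { split.
      - intros i. exists (s i). intros x Hx. rewrite Hf, Hx. reflexivity.
      - intros i. destruct (Hs i) as [a Ha]. destruct (Hpart a) as [x Hx].
        exists x. rewrite Hf, Hx. exact Ha. }
    exists (chi_class block f). split. exists f; split; [exact HS | reflexivity].
    apply functional_extensionality; intros i. destruct (Hpart i) as [x <-].
    rewrite phi_spec; auto.
  - intros C D [f [Hf ->]] [g [Hg ->]].
    assert (Hfg := Sigma_comp Hpart Hf Hg).
    assert (E : mulQ block (chi_class block f) (chi_class block g) = chi_class block (rcomp f g)).
    { apply functional_extensionality; intros h.
      apply propositional_extensionality. split.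
      - intros [Hh [f' [g' [[Hf' Cf] [[Hg' Cg] Hc]]]]]. split; [exact Hh|].
        assert (Hfg' := Sigma_comp Hpart Hf' Hg').
        apply (chi_iff (proj1 Hfg) (proj1 Hh)). intros x.
        rewrite <- (proj1 (chi_iff (proj1 Hfg') (proj1 Hh)) Hc x).
        unfold rcomp.
        rewrite <- (proj1 (chi_iff (proj1 Hg) (proj1 Hg')) Cg).
        apply T_resp; [exact (proj1 Hg)|].
        apply (proj1 (chi_iff (proj1 Hf) (proj1 Hf')) Cf).
      - intros [Hh Hc]. split; [exact Hh|]. exists f, g.
        split; [split; [exact Hf | apply chi_refl]|].
        split; [split; [exact Hg | apply chi_refl]|]. exact Hc. }
    rewrite E. apply functional_extensionality; intros i.
    destruct (Hpart i) as [x <-]. unfold rcomp at 1.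
    rewrite (phi_spec Hfg). unfold rcomp. rewrite (phi_spec Hf). rewrite (phi_spec Hg). reflexivity.
Qed.
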